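(* Let $F$ be a violating edge set and let $(\mathcal{T},\mathcal{M},y)$ be a tree embedding that is good for $F$. Let $E'\subseteq E(\mathcal{T})\setminus\mathcal{M}^{-1}(F)$ and suppose that for every $(A,B)\in Z_F$ there is a path in $E'$ connecting (the leaves corresponding to) $A$ to (the leaves corresponding to) $B$. Then for every $i\in[k]$ there is an $s_i$–$t_i$ path in the graph with edge set $(\mathcal{M}(E')\cup H)\setminus F$, where $\mathcal{M}(E')=\bigcup_{f\in E'}\mathcal{M}_2(f)$.
   Context: Setting: $G=(V,E)$ is an undirected graph whose edges are partitioned into safe and unsafe edges; $p,q$ are nonnegative integers with $p+q\ge1$; $(s_i,t_i)$, $i\in[k]$, are terminal pairs; $H\subseteq E$ is such that every pair is $(p,q)$-flex-connected in $H$ (every cut $\delta_H(S)$ separating $s_i$ from $t_i$ has at least $p$ safe edges or at least $p+q$ edges). A violating edge set is $F=\delta_H(S)$ for some $S$ separating some pair with $|\delta_H(S)|=p+q$ and at most $p-1$ safe edges. Let $\beta\ge1$ and let $\tilde x:E\to\mathbb{R}_{>0}$ be capacities. A tree embedding of $(G,\tilde x)$ is a tree $\mathcal{T}$ with $\mathcal{M}_1:V(\mathcal{T})\to V$ restricting to a bijection between leaves of $\mathcal{T}$ and $V$ (we identify each vertex of $V$ with its leaf), and $\mathcal{M}_2$ mapping each tree edge $(a,b)$ to a path in $G$ between $\mathcal{M}_1(a)$ and $\mathcal{M}_1(b)$; capacities $y(f)=\tilde x(\delta_G(A'))$ where $A'$ is the vertex set corresponding to the leaves of one component of $\mathcal{T}-f$;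 $\mathcal{M}^{-1}(F)=\{f\in E(\mathcal{T}):\mathcal{M}_2(f)\cap F\neq\emptyset\}$. The embedding is good for $F$ if $y(\mathcal{M}^{-1}(F))\le\frac12$. Let $\mathcal{Q}_F$ be the set of vertex sets of connected components of $(V,H\setminus F)$; $Q_{s_i},Q_{t_i}\in\mathcal{Q}_F$ are the components containing $s_i,t_i$. A component $Q\in\mathcal{Q}_F$ is shattered if its leaves do not all lie in one connected component of $\mathcal{T}-\mathcal{M}^{-1}(F)$. Disjoint $A,B\subseteq V$ partition the shattered components if every shattered component is contained in $A$ or in $B$. $Z_F=\{(A\cup Q_{s_i},B\cup Q_{t_i}): (A,B)\text{ partitions the shattered components}, i\in[k]\}$. *)

(* Defs.v *)
From HB Require Import structures.
From mathcomp Require Import all_boot all_order all_algebra.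
Set Implicit Arguments. Unset Strict Implicit. Unset Printing Implicit Defensive.
Import Order.TTheory GRing.Theory Num.Theory.
Local Open Scope ring_scope.

Section Graphs.
Variables (V E : finType) (ends : E -> V * V).

Definition joins (e : E) (u v : V) : bool :=
  (((ends e).1 == u) && ((ends e).2 == v)) || (((ends e).1 == v) && ((ends e).2 == u)).

Definition adj (S : {set E}) : rel V := fun u v => [exists e in S, joins e u v].

Definition conn (S : {set E}) (u v : V) : bool := connect (adj S) u v.

Definition cut (S : {set E}) (X : {set V}) : {set E} :=
  [set e in S | ((ends e).1 \in X) != ((ends e).2 \in X)].

Definition next_vertex (e : E) (u : V) : option V :=
  if (ends e).1 == u then Some (ends e).2
  else if (ends e).2 == u then Some (ends e).1 else None.

Fixpoint walk_verts (u : V) (es : seq E) : option (seq V) :=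
  match es with
  | [::] => Some [:: u]
  | e :: es' => match next_vertex e u with
                | Some w => omap (cons u) (walk_verts w es')
                | None => None
                end
  end.

Definition gpath (u v : V) (es : seq E) : bool :=
  if walk_verts u es is Some vs then (last u vs == v) && uniq vs else false.

Definition is_tree : Prop :=
  (forall a b : V, conn setT a b) /\
  (forall e : E, ~~ conn (~: [set e]) (ends e).1 (ends e).2).

Definition leaf (a : V) : bool := (#|[set e | (ends e).1 == a] :|: [set e | (ends e).2 == a]| <= 1)%N.
End Graphs.

Section Flex.
Variables (V E : finType) (ends : E -> V * V) (safe : {set E}) (p q k : nat)
          (s t : 'I_k -> V) (H : {set E}).

Definition separates (X : {set V}) (i : 'I_k) : bool := (s i \in X) != (t i \in X).

Definition flex_connected : Prop :=
  forall (X : {set V}) (i : 'I_k), separates X i ->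
    (p <= #|cut ends H X :&: safe|)%N \/ (p + q <= #|cut ends H X|)%N.

Definition violating (F : {set E}) : Prop :=
  exists (X : {set V}) (i : 'I_k), separates X i /\ F = cut ends H X /\
    #|F| = (p + q)%N /\ (#|F :&: safe| < p)%N.
End Flex.

Section Embedding.
Variables (R : realFieldType) (V E : finType) (ends : E -> V * V) (xt : E -> R)
          (TV TE : finType) (tends : TE -> TV * TV) (M1 : TV -> V) (M2 : TE -> seq E).

Definition tree_embedding : Prop :=
  is_tree tends /\
  {in leaf tends &, injective M1} /\
  (forall v : V, exists2 a, leaf tends a & M1 a = v) /\
  (forall f : TE, gpath ends (M1 (tends f).1) (M1 (tends f).2) (M2 f)).

Definition leaf_verts (C : {set TV}) : {set V} :=
  [set v | [exists a in C, leaf tends a && (M1 a == v)]].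

(* A' : leaves in the component of T - f containing the first endpoint of f *)
Definition side (f : TE) : {set V} :=
  leaf_verts [set a | conn tends (~: [set f]) (tends f).1 a].

Definition ycap (f : TE) : R := \sum_(e in cut ends setT (side f)) xt e.

Definition Minv (F : {set E}) : {set TE} := [set f | [exists e in F, e \in M2 f]].

Definition Mimg (E' : {set TE}) : {set E} := [set e | [exists f in E', e \in M2 f]].

Definition good (F : {set E}) : Prop := \sum_(f in Minv F) ycap f <= 2^-1.

Definition comp (H F : {set E}) (v : V) : {set V} := [set u | conn ends (H :\: F) v u].

Definition shattered (H F : {set E}) (Q : {set V}) : Prop :=
  exists a b, [/\ leaf tends a, leaf tends b, M1 a \in Q, M1 b \in Q &
                  ~~ conn tends (~: Minv F) a b].

Definition partitions_shattered (H F : {set E}) (A B : {set V}) : Prop :=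
  [disjoint A & B] /\
  forall v : V, shattered H F (comp H F v) -> comp H F v \subset A \/ comp H F v \subset B.

Definition inZ (k : nat) (s t : 'I_k -> V) (H F : {set E}) (A' B' : {set V}) : Prop :=
  exists (A B : {set V}) (i : 'I_k), partitions_shattered H F A B /\
    A' = A :|: comp H F (s i) /\ B' = B :|: comp H F (t i).
End Embedding.

(* Main.v *)
Require Import Defs.
From HB Require Import structures.
From mathcomp Require Import all_boot all_order all_algebra.
Import Order.TTheory GRing.Theory Num.Theory.
Local Open Scope ring_scope.

Set Implicit Arguments.
Section Helpers.
Variables (V E : finType) (ends : E -> V * V).

Lemma adj_sym (S : {set E}) : symmetric (adj ends S).
Proof.
move=> u v; rewrite /adj; apply/existsP/existsP => -[e /andP[eS j]]; exists e;
  by rewrite eS /joins orbC.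
Qed.

Lemma conn_sym (S : {set E}) u v : conn ends S u v = conn ends S v u.
Proof. exact: (sym_connect_sym (@adj_sym S)). Qed.

Lemma conn_trans (S : {set E}) u v w :
  conn ends S u v -> conn ends S v w -> conn ends S u w.
Proof. exact: connect_trans. Qed.

Lemma conn_mono (S S' : {set E}) u v : S \subset S' ->
  conn ends S u v -> conn ends S' u v.
Proof.
move=> sub; apply: connect_sub => x y /existsP[e /andP[eS j]].
apply: connect1; apply/existsP; exists e; by rewrite (subsetP sub _ eS).
Qed.

Lemma walk_head u es vs : walk_verts ends u es = Some vs -> exists vs', vs = u :: vs'.
Proof.
case: es => [|e es] /=; first by case=> <-; exists [::].
case: (next_vertex ends e u) => // w.
by case: (walk_verts ends w es) => //= vs' [<-]; exists vs'.
Qed.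

Lemma walk_conn (S : {set E}) es : forall u vs,
  walk_verts ends u es = Some vs -> {subset es <= S} ->
  conn ends S u (last u vs).
Proof.
elim: es => [|e es IH] u vs /=; first by case=> <- _; exact: connect0.
rewrite /next_vertex.
move=> Hw sub.
have eS : e \in S by apply: sub; rewrite inE eqxx.
have sub' : {subset es <= S} by move=> x xi; apply: sub; rewrite inE xi orbT.
have gen : forall w, joins ends e u w ->
   omap (cons u) (walk_verts ends w es) = Some vs -> conn ends S u (last u vs).
  move=> w j; case Ew: (walk_verts ends w es) => [vs'|] //= [<-].
  have [vs'' Evs] := @walk_head w es vs' Ew.
  have IH' := IH _ _ Ew sub'; rewrite Evs /= in IH' *.
  apply: (@conn_trans _ _ w); first by apply: connect1; apply/existsP; exists e; rewrite eS.
  exact: IH'.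
move: Hw; case: ifP => [/eqP h1|_].
  by apply: gen; rewrite /joins h1 eqxx eqxx.
case: ifP => [/eqP h2|//].
by apply: gen; rewrite /joins h2 !eqxx orbT.
Qed.

Lemma gpath_conn (S : {set E}) u v es :
  gpath ends u v es -> {subset es <= S} -> conn ends S u v.
Proof.
rewrite /gpath; case Ew: (walk_verts ends u es) => [vs|] //= /andP[/eqP <- _].
exact: walk_conn.
Qed.
End Helpers.
Arguments conn_trans {V E ends S u v w}.
Arguments conn_mono {V E ends S S' u v}.
Arguments conn_sym {V E ends S}.

Theorem claim4p3 (R : realFieldType) (V E : finType) (ends : E -> V * V)
  (safe : {set E}) (p q k : nat) (s t : 'I_k -> V) (H : {set E}) (xt : E -> R)
  (TV TE : finType) (tends : TE -> TV * TV) (M1 : TV -> V) (M2 : TE -> seq E)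
  (F : {set E}) (E' : {set TE}) :
  (0 < p + q)%N ->
  flex_connected ends safe p q s t H ->
  (forall e, 0 < xt e) ->
  violating ends safe p q s t H F ->
  tree_embedding ends tends M1 M2 ->
  good ends xt tends M1 M2 F ->
  E' \subset ~: Minv M2 F ->
  (forall A' B' : {set V}, inZ ends tends M1 M2 s t H F A' B' ->
     exists a b, [/\ leaf tends a, leaf tends b, M1 a \in A', M1 b \in B' &
                    conn tends E' a b]) ->
  forall i : 'I_k, conn ends ((Mimg M2 E' :|: H) :\: F) (s i) (t i).
Proof.
move=> _ _ _ _ [_ [_ [_ Hpath]]] _ sE' HZ i.
set S := (Mimg M2 E' :|: H) :\: F.
have HS : H :\: F \subset S by apply/subsetP=> e; rewrite !inE => /andP[-> ->]; rewrite orbT.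
have tr : forall a b, conn tends E' a b -> conn ends S (M1 a) (M1 b).
  have step : forall a b, adj tends E' a b -> conn ends S (M1 a) (M1 b).
  move=> a b /existsP[f /andP[fE j]].
  have sub : {subset M2 f <= S}.
    move=> e ef; rewrite !inE.
    have /subsetP := sE'; move=> /(_ f fE); rewrite !inE => nF.
    apply/andP; split.
      apply/negP => eF; move/negP: nF; apply; apply/existsP; exists e; by rewrite eF.
    by apply/orP; left; apply/existsP; exists f; rewrite fE.
  have g := @gpath_conn V E ends S _ _ _ (Hpath f) sub.
  case/orP: j => /andP[/eqP h1 /eqP h2]; rewrite -h1 -h2 //.
  by rewrite conn_sym.
  move=> a b /connectP[pth pp ->]; elim: pth a pp => [|c pth IHp] a /=.
    by move=> _; exact: connect0.
  move=> /andP[ac pc]; apply: conn_trans (step _ _ ac) (IHp _ pc).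
set C := [set u | conn ends S (s i) u].
have compC : forall v, Defs.comp ends H F v \subset C \/ Defs.comp ends H F v \subset ~: C.
  move=> v; case vC: (v \in C); [left|right]; apply/subsetP => u; rewrite !inE => cu.
    apply: conn_trans (conn_mono HS cu); by move: vC; rewrite inE.
  apply/negP => uC; move: vC; rewrite inE => /negbT/negP; apply.
  apply: conn_trans uC _; rewrite conn_sym; exact: conn_mono HS cu.
have part : partitions_shattered ends tends M1 M2 H F C (~: C).
  by split; [rewrite disjoints_subset setCK | move=> v _; exact: compC].
have inz : inZ ends tends M1 M2 s t H F (C :|: Defs.comp ends H F (s i)) (~: C :|: Defs.comp ends H F (t i)).
  by exists C, (~: C), i.
have [a [b [_ _ aA bB ab]]] := HZ _ _ inz.
have aC : M1 a \in C.
  move: aA; rewrite inE => /orP[//|]; rewrite !inE => h; exact: conn_mono HS h.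
have bC : M1 b \in C by rewrite inE; apply: conn_trans (tr _ _ ab); rewrite -inE.
have bC' : conn ends S (s i) (M1 b) by move: bC; rewrite inE.
move: bB; rewrite !inE => /orP[]; first by rewrite bC'.
move=> h; apply: conn_trans bC' _.
by rewrite conn_sym; exact: conn_mono HS h.
Qed.
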